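(* Let $k\ge 1$. Let $\mathcal M^\Box_{2k+1,0}$ (resp. $\mathcal M^\Box_{2k+1,1}$) be the set of elements of $\mathcal M^\Box_{2k+1}$ whose central square $k+1$ is land (resp. water). Then $\mathrm{red}\circ\mathrm{contr}$ restricts to bijections $\mathcal M^\Box_{2k+1,0}\to\mathcal N_k$ and $\mathcal M^\Box_{2k+1,1}\to \mathcal N_{k,1}\cup\mathcal N_{k,2}\cup\{R_{\mathrm{land}}\}$. Consequently $M^\Box_{2k+1} = N_k + N_{k,1}+N_{k,2}+1$.
   Context: Colorings. Each square is colored water or land. Two distinct squares are adjacent if they share an edge after all edge identifications; a set of squares is connected if its induced adjacency graph is connected (empty set counts as connected). (N1): the water is connected. For an interior (non-boundary) vertex $v$, its square-degree is the number of distinct squares having $v$ as a corner. (N2$\Box$): no interior vertex of square-degree $4$ has all incident squares water. A $2\times k$ Nurikabe rectangle is a coloring of the $2\times k$ grid (columns $1,\dots,k$ left to right, no identifications) with connected water and no $2\times 2$ block of water squares; $\mathcal N_k$ is the set of these, $N_k=|\mathcal N_k|$; $\mathcal N_{k,i}$ is the subset with exactly $i$ water squares in column $k$, $N_{k,i}=|\mathcal N_{k,i}|$. $R_{\mathrm{land}}\in\mathcal N_k$ is the all-land rectangle. Tile $[0,n]\times[0,1]$ by unit squares $[j-1,j]\times[0,1]$, called square $j$. The $1\times n$ Möbius strip identifies $(x,1)\sim(n-x,0)$ for $x\in[0,n]$; its boundary is the image of the vertical sides. $\mathcal M^\Box_n$ is the set of colorings of the $1\times n$ Möbius strip satisfying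 (N1) and (N2$\Box$), $M^\Box_n=|\mathcal M^\Box_n|$. Contraction: for a coloring of the $1\times(2k+1)$ Möbius strip, $\mathrm{contr}$ gives the coloring of the $1\times 2k$ Möbius strip obtained by deleting square $k+1$, with square $j\le k$ keeping position $j$ and square $j\ge k+2$ moving to position $j-1$. Rectangular reduction: for a coloring of the $1\times 2k$ Möbius strip, $\mathrm{red}$ gives the coloring of the $2\times k$ grid whose column $j$ has top square colored as square $j$ and bottom square colored as square $2k+1-j$. *)

(* Defs.v *)
(* Water = true, land = false. Squares are 0-indexed:
   square j (paper, 1-indexed) is the ordinal j-1. *)
From mathcomp Require Import all_boot.
From mathcomp Require Import zify.
Set Implicit Arguments. Unset Strict Implicit. Unset Printing Implicit Defensive.

(* Connectedness of a set S of vertices in the induced subgraph of e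
   (the empty set is connected). *)
Definition connectedb (T : finType) (e : rel T) (S : {set T}) : bool :=
  [forall x in S, forall y in S,
     connect [rel a b | [&& a \in S, b \in S & e a b]] x y].

Definition water_set (T : finType) (c : {ffun T -> bool}) : {set T} :=
  [set x | c x].

(* Two distinct squares share an edge: a common vertical edge (|i-j|=1),
   or the top edge of one is glued to the bottom edge of the other,
   i.e. (1-indexed) j = n+1-i, i.e. (0-indexed) i + j + 1 = n. *)
Definition mob_adj (n : nat) : rel 'I_n :=
  fun i j => (i != j) && [|| i.+1 == j, j.+1 == i | i + j + 1 == n].

(* Lattice points (x,y), x in [0,n], y in {0,1} (true = 1). *)
Definition mob_pt (n : nat) := ('I_n.+1 * bool)%type.

(* The identification (x,1) ~ (n-x,0) on lattice points. *)
Definition mob_equiv (n : nat) (p q : mob_pt n) : bool :=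
  (p == q) || ((p.2 != q.2) && (p.1 + q.1 == n)).

(* p is a corner of square s = [s, s+1] x [0,1] (0-indexed). *)
Definition mob_corner (n : nat) (s : 'I_n) (p : mob_pt n) : bool :=
  (p.1 == s :> nat) || (p.1 == s.+1 :> nat).

Definition mob_squares_at (n : nat) (v : mob_pt n) : {set 'I_n} :=
  [set s : 'I_n | [exists p : mob_pt n, mob_corner s p && mob_equiv v p]].

(* Interior vertex: not on the image of the vertical sides x = 0, x = n. *)
Definition mob_interior (n : nat) (v : mob_pt n) : bool := 0 < v.1 < n.

Definition mob_N1 (n : nat) (c : {ffun 'I_n -> bool}) : bool :=
  connectedb (@mob_adj n) (water_set c).

Definition mob_N2box (n : nat) (c : {ffun 'I_n -> bool}) : bool :=
  [forall v : mob_pt n,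
     (mob_interior v && (#|mob_squares_at v| == 4)) ==>
       [exists s in mob_squares_at v, ~~ c s]].

Definition Mbox (n : nat) : {set {ffun 'I_n -> bool}} :=
  [set c | mob_N1 c && mob_N2box c].

(* cell (r, j): row r (0 = top, 1 = bottom), column j (0-indexed). *)
Definition grid_adj (k : nat) : rel ('I_2 * 'I_k) :=
  fun p q => ((p.1 == q.1) && ((p.2.+1 == q.2 :> nat) || (q.2.+1 == p.2 :> nat)))
          || ((p.2 == q.2) && (p.1 != q.1)).

Definition no_water_2x2 (k : nat) (R : {ffun 'I_2 * 'I_k -> bool}) : bool :=
  [forall c : 'I_k, forall d : 'I_k, (c.+1 == d :> nat) ==>
     ~~ [&& R (ord0, c), R (ord_max, c), R (ord0, d) & R (ord_max, d)]].

Definition Nurik (k : nat) : {set {ffun 'I_2 * 'I_k -> bool}} :=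
  [set R | connectedb (@grid_adj k) (water_set R) && no_water_2x2 R].

Definition Nurik_i (k i : nat) : {set {ffun 'I_2 * 'I_k -> bool}} :=
  [set R in Nurik k | [forall c : 'I_k, (c == k.-1 :> nat) ==>
                          (#|[set r : 'I_2 | R (r, c)]| == i)]].

Definition R_land (k : nat) : {ffun 'I_2 * 'I_k -> bool} := [ffun _ => false].

Definition contr (k : nat) (c : {ffun 'I_(2 * k).+1 -> bool})
  : {ffun 'I_(2 * k) -> bool} :=
  [ffun j : 'I_(2 * k) => c (inord (if j < k then (j : nat) else j.+1))].

Lemma red_top_lt (k : nat) (j : 'I_k) : j < 2 * k.
Proof. have := ltn_ord j; lia. Qed.

Lemma red_bot_lt (k : nat) (j : 'I_k) : (2 * k).-1 - j < 2 * k.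
Proof. have := ltn_ord j; lia. Qed.

(* red: column j (1-indexed) has top = square j, bottom = square 2k+1-j;
   0-indexed: top = j, bottom = 2k-1-j. *)
Definition red (k : nat) (m : {ffun 'I_(2 * k) -> bool})
  : {ffun 'I_2 * 'I_k -> bool} :=
  [ffun p : 'I_2 * 'I_k =>
     if p.1 == ord0 then m (Ordinal (red_top_lt p.2))
     else m (Ordinal (red_bot_lt p.2))].

(* central square k+1 (1-indexed) = k (0-indexed) *)
Definition Mbox_c (k : nat) (b : bool) : {set {ffun 'I_(2 * k).+1 -> bool}} :=
  [set c in Mbox (2 * k).+1 | c (inord k) == b].

(* Main.v *)
Require Import Defs.
From mathcomp Require Import all_boot zify.
Set Implicit Arguments. Unset Strict Implicit. Unset Printing Implicit Defensive.

Definition phi k (p : 'I_2 * 'I_k.+1) : 'I_(2 * k.+1).+1 :=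
  inord (if p.1 == ord0 then (p.2 : nat) else 2 * k.+1 - p.2).
Definition psi k (i : 'I_(2 * k.+1).+1) : 'I_2 * 'I_k.+1 :=
  if i < k.+1 then (ord0, inord i) else (ord_max, inord (2 * k.+1 - i)).
Definition ctr k : 'I_(2 * k.+1).+1 := inord k.+1.

Lemma I2_cases (r : 'I_2) : r = ord0 \/ r = ord_max.
Proof. by case: r => [[|[|m]] H]; [left; apply/val_inj | right; apply/val_inj | ]. Qed.

Lemma phi_val k (p : 'I_2 * 'I_k.+1) : val (phi p) = if p.1 == ord0 then (p.2 : nat) else 2 * k.+1 - p.2.
Proof. rewrite /phi /= inordK //; have := ltn_ord p.2; case: ifP => _; lia. Qed.

Lemma ctr_val k : val (ctr k) = k.+1.
Proof. rewrite /ctr /= inordK //; lia. Qed.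

Lemma phi_ctr k (p : 'I_2 * 'I_k.+1) : phi p != ctr k.
Proof.
rewrite -val_eqE /= phi_val ctr_val; have := ltn_ord p.2; case: ifP => _; lia.
Qed.

Lemma psi_phi k p : psi (phi (k:=k) p) = p.
Proof.
case: p => r j; rewrite /psi phi_val /=; have := ltn_ord j.
case: (I2_cases r) => -> /= Hj.
  rewrite Hj; congr pair; apply/val_inj; rewrite /= inordK //.
have -> : (2 * k.+1 - j < k.+1) = false by lia.
congr pair; apply/val_inj; rewrite /= inordK //; lia.
Qed.

Lemma phi_psi k i : i != ctr k -> phi (psi i) = i.
Proof.
rewrite -val_eqE /= ctr_val => Hi; apply/val_inj; rewrite /= phi_val /psi.
have := ltn_ord i; case: (ltnP i k.+1) => H /= Hl; rewrite inordK //; lia.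
Qed.

Lemma f_val k (c : {ffun 'I_(2 * k.+1).+1 -> bool}) p :
  red (contr c) p = c (phi p).
Proof.
rewrite /red /contr !ffunE; case: p => r j; have := ltn_ord j => Hj.
case: (I2_cases r) => -> ; rewrite /phi /=; congr (c (inord _)); case: ifP; lia.
Qed.

Lemma adj_phi k (p q : 'I_2 * 'I_k.+1) : mob_adj (phi p) (phi q) = grid_adj p q.
Proof.
case: p q => [r i] [s j]; rewrite /mob_adj /grid_adj -val_eqE /= !phi_val /=.
have := ltn_ord i; have := ltn_ord j.
case: (I2_cases r) => ->; case: (I2_cases s) => -> /= Hj Hi; rewrite -?val_eqE /=; apply/idP/idP; lia.
Qed.
Lemma adj_ctr k (i : 'I_(2 * k.+1).+1) :
  mob_adj (ctr k) i = (i == k :> nat) || (i == k.+2 :> nat).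
Proof.
rewrite /mob_adj -val_eqE /= ctr_val; have := ltn_ord i; move=> Hi; apply/idP/idP; lia.
Qed.

Lemma adj_ctr' k (i : 'I_(2 * k.+1).+1) :
  mob_adj i (ctr k) = (i == k :> nat) || (i == k.+2 :> nat).
Proof.
rewrite /mob_adj -val_eqE /= ctr_val; have := ltn_ord i; move=> Hi; apply/idP/idP; lia.
Qed.

Definition l0 k : 'I_2 * 'I_k.+1 := (ord0, ord_max).
Definition l1 k : 'I_2 * 'I_k.+1 := (ord_max, ord_max).

Lemma phi_l0 k : val (phi (l0 k)) = k.
Proof. by rewrite phi_val. Qed.
Lemma phi_l1 k : val (phi (l1 k)) = k.+2.
Proof. rewrite phi_val /=; lia. Qed.

Lemma adj_ctr_cases k (i : 'I_(2 * k.+1).+1) :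
  (i == k :> nat) || (i == k.+2 :> nat) -> i = phi (l0 k) \/ i = phi (l1 k).
Proof.
case/orP=> /eqP H; [left|right]; apply/val_inj; rewrite ?phi_l0 ?phi_l1 //.
Qed.

Lemma grid_l01 k : grid_adj (l0 k) (l1 k) /\ grid_adj (l1 k) (l0 k).
Proof. by rewrite /grid_adj /= eqxx. Qed.

Lemma homo_connect (T U : finType) (e : rel T) (e' : rel U) (h : T -> U) :
  (forall x y, e x y -> connect e' (h x) (h y)) ->
  forall x y, connect e x y -> connect e' (h x) (h y).
Proof.
move=> H x y /connectP [p Hp ->]; elim: p x Hp => [|z p IH] x /=.
  by move=> _; exact: connect0.
by case/andP=> exz Hp; exact: connect_trans (H _ _ exz) (IH _ Hp).
Qed.

Lemma connectedbP (T : finType) (e : rel T) (S : {set T}) :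
  reflect (forall x y, x \in S -> y \in S ->
             connect [rel a b | [&& a \in S, b \in S & e a b]] x y)
          (connectedb e S).
Proof.
apply: (iffP idP).
  by move=> /forall_inP H x y Hx Hy; move: (H x Hx) => /forall_inP; apply.
by move=> H; apply/forall_inP => x Hx; apply/forall_inP => y Hy; apply: H.
Qed.

Lemma inW (T : finType) (c : {ffun T -> bool}) x : (x \in water_set c) = c x.
Proof. by rewrite inE. Qed.

Lemma N1_land k (c : {ffun 'I_(2 * k.+1).+1 -> bool}) : c (ctr k) = false ->
  mob_N1 c = connectedb (@grid_adj k.+1) (water_set (red (contr c))).
Proof.
move=> Hc; rewrite /mob_N1; apply/connectedbP/connectedbP => H x y Hx Hy.
- rewrite -(psi_phi x) -(psi_phi y).
  apply: (homo_connect (h := @psi k)); last first.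
    by apply: H; rewrite inW -f_val -?inW.
  move=> a b /= /and3P [Ha Hb Hab]; apply: connect1 => /=.
  have Ha' : a != ctr k by apply: contraTneq Ha => ->; rewrite inW Hc.
  have Hb' : b != ctr k by apply: contraTneq Hb => ->; rewrite inW Hc.
  by rewrite !inW !f_val !phi_psi // -inW Ha -inW Hb -adj_phi !phi_psi.
- rewrite inW in Hx; rewrite inW in Hy.
  have Hx' : x != ctr k by apply: contraTneq Hx => ->; rewrite Hc.
  have Hy' : y != ctr k by apply: contraTneq Hy => ->; rewrite Hc.
  rewrite -(phi_psi Hx') -(phi_psi Hy').
  apply: (homo_connect (h := @phi k)); last first.
    by apply: H; rewrite inW f_val phi_psi.
  move=> a b /= /and3P [Ha Hb Hab]; apply: connect1 => /=.
  by rewrite !inW -!f_val -!inW Ha Hb adj_phi.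
Qed.

Lemma last_connect k (R : {ffun 'I_2 * 'I_k.+1 -> bool}) u v :
  (u == l0 k) || (u == l1 k) -> (v == l0 k) || (v == l1 k) -> R u -> R v ->
  connect [rel a b | [&& a \in water_set R, b \in water_set R & grid_adj a b]] u v.
Proof.
have [g01 g10] := grid_l01 k.
move=> /orP [] /eqP -> /orP [] /eqP -> Hu Hv; rewrite ?connect0 //;
  apply: connect1; rewrite /= !inW Hu Hv //.
Qed.

Lemma N1_water k (c : {ffun 'I_(2 * k.+1).+1 -> bool}) : c (ctr k) = true ->
  mob_N1 c = (connectedb (@grid_adj k.+1) (water_set (red (contr c))) &&
               (red (contr c) (l0 k) || red (contr c) (l1 k)))
             || [forall p, ~~ red (contr c) p].
Proof.
move=> Hc; rewrite /mob_N1; set R := red (contr c).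
have HR p : R p = c (phi p) by rewrite /R f_val.
apply/idP/idP.
- move/connectedbP => H.
  case: (boolP [forall p, ~~ R p]) => [|/forallPn [t]]; first by rewrite orbT.
  rewrite negbK => Rt.
  have Hlast : R (l0 k) || R (l1 k).
    have := H (ctr k) (phi t); rewrite !inW -HR Rt => /(_ Hc isT) /connectP [p].
    case: p => [|a p] /=.
      by move=> _ /eqP; rewrite (negbTE (phi_ctr t)).
    case/andP=> /and3P [_ Ha Hadj] _ _.
    rewrite adj_ctr in Hadj; rewrite inW in Ha.
    by case: (adj_ctr_cases Hadj) => Ea; rewrite !HR -Ea Ha ?orbT.
  rewrite Hlast andbT; apply/orP; left.
  have [w Hw Rw] : exists2 w, (w == l0 k) || (w == l1 k) & R w.
    by case/orP: Hlast => ?; [exists (l0 k); rewrite ?eqxx | exists (l1 k); rewrite ?eqxx ?orbT].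
  apply/connectedbP => x y Hx Hy.
  set hh := fun i => if i == ctr k then w else psi i.
  have Sx : phi x \in water_set c by rewrite inW -HR -inW.
  have Sy : phi y \in water_set c by rewrite inW -HR -inW.
  suff HH : forall a b, [rel a b | [&& a \in water_set c, b \in water_set c & mob_adj a b]] a b ->
     connect [rel a b | [&& a \in water_set R, b \in water_set R & grid_adj a b]] (hh a) (hh b).
    have := homo_connect HH (H _ _ Sx Sy).
    by rewrite /hh !(negbTE (phi_ctr _)) !psi_phi.
  move=> a b /= /and3P [Ha Hb Hab]; rewrite !inW in Ha Hb.
  case: (eqVneq a (ctr k)) => [Ea|Na]; case: (eqVneq b (ctr k)) => [Eb|Nb].
  + by move: Hab; rewrite Ea Eb /mob_adj eqxx.
  + rewrite Ea adj_ctr in Hab.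
    have [Eb'|Eb'] := adj_ctr_cases Hab; rewrite /hh /= Ea eqxx (negbTE Nb) Eb' psi_phi;
      apply: last_connect; rewrite ?eqxx ?orbT // HR -Eb' //.
  + rewrite Eb adj_ctr' in Hab.
    have [Ea'|Ea'] := adj_ctr_cases Hab; rewrite /hh /= Eb eqxx (negbTE Na) Ea' psi_phi;
      apply: last_connect; rewrite ?eqxx ?orbT // HR -Ea' //.
  + apply: connect1; rewrite /hh (negbTE Na) (negbTE Nb) /= !inW !HR !phi_psi // Ha Hb -adj_phi !phi_psi //.
- case/orP.
  + case/andP => /connectedbP H Hlast.
    have [w Hw Rw] : exists2 w, (w == l0 k) || (w == l1 k) & R w.
      by case/orP: Hlast => ?; [exists (l0 k); rewrite ?eqxx | exists (l1 k); rewrite ?eqxx ?orbT].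
    have adjw : mob_adj (ctr k) (phi w) && mob_adj (phi w) (ctr k).
      rewrite adj_ctr adj_ctr'.
      by case/orP: Hw => /eqP ->; rewrite ?phi_l0 ?phi_l1 eqxx ?orbT.
    case/andP: adjw => aw1 aw2.
    have Sw : phi w \in water_set c by rewrite inW -HR.
    have Sc : ctr k \in water_set c by rewrite inW.
    have toW x : x \in water_set c -> x != ctr k ->
        connect [rel a b | [&& a \in water_set c, b \in water_set c & mob_adj a b]] x (phi w)
     /\ connect [rel a b | [&& a \in water_set c, b \in water_set c & mob_adj a b]] (phi w) x.
      move=> Hx Nx; rewrite -(phi_psi Nx).
      have Tx : psi x \in water_set R by rewrite inW HR phi_psi // -inW.
      have Tw : w \in water_set R by rewrite inW.
      have hom : forall p q, [rel a b | [&& a \in water_set R, b \in water_set R & grid_adj a b]] p q ->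
         connect [rel a b | [&& a \in water_set c, b \in water_set c & mob_adj a b]] (phi p) (phi q).
        move=> p q /= /and3P [Hp Hq Hpq]; apply: connect1.
        by rewrite /= !inW -!HR -!inW Hp Hq adj_phi.
      by split; apply: homo_connect hom _ _ _; apply: H.
    have toC x : x \in water_set c ->
        connect [rel a b | [&& a \in water_set c, b \in water_set c & mob_adj a b]] x (ctr k)
     /\ connect [rel a b | [&& a \in water_set c, b \in water_set c & mob_adj a b]] (ctr k) x.
      move=> Hx; case: (eqVneq x (ctr k)) => [->|Nx]; first by rewrite connect0.
      have [h1 h2] := toW x Hx Nx; split.
        by apply: connect_trans h1 _; apply: connect1; rewrite /= Sw Sc aw2.
      by apply: connect_trans _ h2; apply: connect1; rewrite /= Sw Sc aw1.
    apply/connectedbP => x y Hx Hy.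
    exact: connect_trans (toC x Hx).1 (toC y Hy).2.
  + move/forallP => H; apply/connectedbP => x y Hx Hy.
    have Ex z : z \in water_set c -> z = ctr k.
      move=> Hz; apply/eqP; apply: contraT => Nz.
      by move: (H (psi z)); rewrite HR phi_psi // -inW Hz.
    by rewrite (Ex x Hx) (Ex y Hy) connect0.
Qed.

Lemma sq_mem n (v : mob_pt n) (s : 'I_n) : 0 < v.1 < n ->
  (s \in mob_squares_at v) =
  [|| (s == v.1 - 1 :> nat), (s == v.1 :> nat), (s == n - v.1 - 1 :> nat) | (s == n - v.1 :> nat)].
Proof.
case: v => x y /= Hx; rewrite inE /mob_corner /mob_equiv; apply/existsP/idP.
- case=> [[p q]] /andP [Hc /orP [/eqP [Ep _]|/andP [_ /eqP Hs]]]; move: Hc => /=.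
    by rewrite Ep => H; apply/idP; lia.
  by move: Hs => /= Hs H; apply/idP; lia.
- move=> H.
  case: (boolP ((s == x - 1 :> nat) || (s == x :> nat))) => H1.
    by exists (x, y); rewrite /= eqxx andbT; apply/idP; lia.
  have Hnx : n - x < n.+1 by lia.
  exists (Ordinal Hnx, ~~ y); rewrite /=; apply/andP; split; first by apply/idP; lia.
  by apply/orP; right; case: y {H1 H}=> /=; apply/idP; lia.
Qed.

Lemma eq_inord m (s : 'I_m.+1) i : i <= m -> (s == inord i) = (s == i :> nat).
Proof. by move=> H; rewrite -val_eqE /= inordK. Qed.

Lemma sq_card4 k (v : mob_pt (2 * k.+1).+1) : 0 < v.1 < (2 * k.+1).+1 ->
  v.1 != k.+1 :> nat -> v.1 != k.+2 :> nat -> #|mob_squares_at v| = 4.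
Proof.
move=> Hv H1 H2.
have -> : mob_squares_at v =
  (inord (v.1 - 1) : 'I_(2 * k.+1).+1) |: ((inord v.1 : 'I_(2 * k.+1).+1) |: ((inord ((2 * k.+1).+1 - v.1 - 1) : 'I_(2 * k.+1).+1) |: [set (inord ((2 * k.+1).+1 - v.1) : 'I_(2 * k.+1).+1)])).
  by apply/setP => s; rewrite sq_mem // !inE !eq_inord; lia.
rewrite !cardsU1 cards1 !inE !eq_inord ?inordK //; try lia.
Qed.

Lemma sq_card3 k (v : mob_pt (2 * k.+1).+1) : 0 < v.1 < (2 * k.+1).+1 ->
  (v.1 == k.+1 :> nat) || (v.1 == k.+2 :> nat) -> #|mob_squares_at v| <= 3.
Proof.
move=> Hv H1.
have : mob_squares_at v \subset
  (inord k : 'I_(2 * k.+1).+1) |: ((inord k.+1 : 'I_(2 * k.+1).+1) |: [set (inord k.+2 : 'I_(2 * k.+1).+1)]).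
  apply/subsetP => s; rewrite sq_mem // !inE !eq_inord //; try lia.
move/subset_leq_card; rewrite !cardsU1 cards1 => H; apply: leq_trans H _.
by case: (_ \notin _); case: (_ \notin _).
Qed.

Lemma N2_eq k (c : {ffun 'I_(2 * k.+1).+1 -> bool}) :
  mob_N2box c = no_water_2x2 (red (contr c)).
Proof.
set R := red (contr c).
have HR p : R p = c (phi p) by rewrite /R f_val.
apply/idP/idP.
- move/forallP => H; apply/forallP => c1; apply/forallP => d; apply/implyP => /eqP Hcd.
  have Hd : d < k.+1 := ltn_ord d.
  have Hdn : d < (2 * k.+1).+2 by lia.
  pose v : mob_pt (2 * k.+1).+1 := (Ordinal Hdn, false).
  have Hv : 0 < v.1 < (2 * k.+1).+1 by rewrite /=; lia.
  have := H v; rewrite /mob_interior Hv (sq_card4 Hv) /=; try lia.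
  case/existsP => s /andP [Hs Ns]; rewrite sq_mem // /= in Hs.
  rewrite !HR; apply: contra Ns => /and4P [h1 h2 h3 h4].
  case/or4P: Hs => /eqP Es.
  + by have -> : s = phi (ord0, c1) by apply/val_inj; rewrite /= phi_val /=; lia.
  + by have -> : s = phi (ord0, d) by apply/val_inj; rewrite /= phi_val /=; lia.
  + by have -> : s = phi (ord_max, d) by apply/val_inj; rewrite /= phi_val /=; lia.
  + by have -> : s = phi (ord_max, c1) by apply/val_inj; rewrite /= phi_val /=; lia.
- move=> W; apply/forallP => v; apply/implyP => /andP [Hint H4].
  rewrite /mob_interior in Hint.
  move: Hint H4; case: v => x y /= Hint H4.
  set v : mob_pt (2 * k.+1).+1 := (x, y) in H4 *.
  have Hint' : 0 < v.1 < (2 * k.+1).+1 by [].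
  have Hx : (v.1 != k.+1 :> nat) && (v.1 != k.+2 :> nat).
    apply: contraTT H4; rewrite negb_and !negbK => H.
    by have := sq_card3 Hint' H; case: #|_| => [|[|[|[|m]]]].
  have [j Ej] : {j | j = if v.1 < k.+1 then (v.1 : nat) else (2 * k.+1).+1 - v.1}
    by eexists.
  have Hj : 0 < j < k.+1 by move: Ej; case: ifP => ? ?; lia.
  pose c1 : 'I_k.+1 := inord (j - 1).
  pose d : 'I_k.+1 := inord j.
  have vc1 : (c1 : nat) = j - 1 by rewrite /c1 inordK; lia.
  have vd : (d : nat) = j by rewrite /d inordK; lia.
  move: W => /forallP /(_ c1) /forallP /(_ d) /implyP; rewrite vc1 vd.
  have -> : (j - 1).+1 == j by lia.
  move=> /(_ isT); rewrite !HR !negb_and.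
  have mem q : phi q \in mob_squares_at v =
    [|| (phi q == v.1 - 1 :> nat), (phi q == v.1 :> nat),
        (phi q == (2 * k.+1).+1 - v.1 - 1 :> nat) | (phi q == (2 * k.+1).+1 - v.1 :> nat)].
    by rewrite sq_mem.
  case/or4P => Nq; apply/existsP; [exists (phi (ord0, c1))|exists (phi (ord_max, c1))
    |exists (phi (ord0, d))|exists (phi (ord_max, d))]; rewrite Nq andbT mem phi_val /v /= ?vc1 ?vd;
    move: Ej Hx; rewrite /v /=; case: ifP => ? ? ?; lia.
Qed.

Lemma card2 (P : pred 'I_2) : #|[set r | P r]| = P ord0 + P ord_max.
Proof.
rewrite -sum1dep_card big_mkcond /= big_ord_recr big_ord_recr big_ord0 /=.
have -> : widen_ord (m:=2) (leqnSn 1) ord_max = ord0 by apply/val_inj.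
by case: (P ord0); case: (P ord_max).
Qed.

Lemma Nurik_i_mem k (R : {ffun 'I_2 * 'I_k.+1 -> bool}) i :
  (R \in Nurik_i k.+1 i) = (R \in Nurik k.+1) && (R (l0 k) + R (l1 k) == i).
Proof.
rewrite [in LHS]inE; congr andb; apply/forallP/idP.
- move/(_ ord_max)/implyP; rewrite eqxx => /(_ isT).
  by rewrite (card2 (fun r => R (r, ord_max))).
- move=> H c; apply/implyP => /eqP Hc.
  have -> : c = ord_max by apply/val_inj.
  by rewrite (card2 (fun r => R (r, ord_max))).
Qed.

Lemma allF k (R : {ffun 'I_2 * 'I_k.+1 -> bool}) :
  [forall p, ~~ R p] = (R == R_land k.+1).
Proof.
apply/forallP/eqP => [H|->]; last by move=> p; rewrite ffunE.
by apply/ffunP => p; rewrite ffunE; apply/negbTE.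
Qed.

Lemma target_mem k (R : {ffun 'I_2 * 'I_k.+1 -> bool}) :
  (R \in Nurik_i k.+1 1 :|: Nurik_i k.+1 2 :|: [set R_land k.+1]) =
  ((R \in Nurik k.+1) && (R (l0 k) || R (l1 k))) || (R == R_land k.+1).
Proof.
rewrite !in_setU !Nurik_i_mem in_set1.
by case: (R (l0 k)); case: (R (l1 k)); case: (R \in Nurik k.+1).
Qed.

Lemma Mbox_land k (c : {ffun 'I_(2 * k.+1).+1 -> bool}) : c (ctr k) = false ->
  (c \in Mbox (2 * k.+1).+1) = (red (contr c) \in Nurik k.+1).
Proof. by move=> Hc; rewrite !inE -N1_land // N2_eq. Qed.

Lemma Mbox_water k (c : {ffun 'I_(2 * k.+1).+1 -> bool}) : c (ctr k) = true ->
  (c \in Mbox (2 * k.+1).+1) =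
  (red (contr c) \in Nurik_i k.+1 1 :|: Nurik_i k.+1 2 :|: [set R_land k.+1]).
Proof.
move=> Hc; rewrite target_mem [in LHS]inE N1_water // N2_eq allF [_ \in Nurik _]inE.
case E: (red (contr c) == R_land k.+1); last first.
  by rewrite !orbF; case: (connectedb _ _); case: (_ || _); case: (no_water_2x2 _).
rewrite !orbT (eqP E) /=; apply/forallP => c1; apply/forallP => d; apply/implyP => _.
by rewrite !ffunE.
Qed.

Theorem lemma4p3 (k : nat) (hk : 1 <= k) :
  let f := fun c => red (contr c) in
  (* bijection M^Box_{2k+1,0} -> N_k *)
  [/\ {in Mbox_c k false, forall c, f c \in Nurik k},
      {in Mbox_c k false &, injective f},
      (forall R, R \in Nurik k -> exists2 c, c \in Mbox_c k false & f c = R),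
  (* bijection M^Box_{2k+1,1} -> N_{k,1} u N_{k,2} u {R_land} *)
      [/\ {in Mbox_c k true, forall c,
              f c \in Nurik_i k 1 :|: Nurik_i k 2 :|: [set R_land k]},
          {in Mbox_c k true &, injective f} &
          (forall R, R \in Nurik_i k 1 :|: Nurik_i k 2 :|: [set R_land k] ->
             exists2 c, c \in Mbox_c k true & f c = R)] &
  (* counting *)
      #|Mbox (2 * k).+1| = #|Nurik k| + #|Nurik_i k 1| + #|Nurik_i k 2| + 1].
Proof.
case: k hk => [//|k] _ f.
have Mc b c : (c \in Mbox_c k.+1 b) = (c \in Mbox (2 * k.+1).+1) && (c (ctr k) == b).
  by rewrite inE.
have inj b : {in Mbox_c k.+1 b &, injective f}.
  move=> c1 c2; rewrite !Mc => /andP [_ /eqP h1] /andP [_ /eqP h2] Hf.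
  apply/ffunP => i; case: (eqVneq i (ctr k)) => [->|Ni]; first by rewrite h1 h2.
  by rewrite -(phi_psi Ni) -!f_val; rewrite /f in Hf; rewrite Hf.
have surj b R : exists2 c : {ffun 'I_(2 * k.+1).+1 -> bool}, c (ctr k) = b & f c = R.
  exists [ffun i => if i == ctr k then b else R (psi i)]; first by rewrite ffunE eqxx.
  by apply/ffunP => p; rewrite /f f_val ffunE (negbTE (phi_ctr p)) psi_phi.
have P1 : {in Mbox_c k.+1 false, forall c, f c \in Nurik k.+1}.
  by move=> c; rewrite Mc => /andP [Hm /eqP Hc]; rewrite /f -Mbox_land.
have P3 : forall R, R \in Nurik k.+1 -> exists2 c, c \in Mbox_c k.+1 false & f c = R.
  move=> R HR; have [c Hc Hf] := surj false R; exists c => //.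
  by rewrite Mc Hc eqxx andbT Mbox_land //; rewrite /f in Hf; rewrite Hf.
have P4 : {in Mbox_c k.+1 true, forall c,
              f c \in Nurik_i k.+1 1 :|: Nurik_i k.+1 2 :|: [set R_land k.+1]}.
  by move=> c; rewrite Mc => /andP [Hm /eqP Hc]; rewrite /f -Mbox_water.
have P6 : forall R, R \in Nurik_i k.+1 1 :|: Nurik_i k.+1 2 :|: [set R_land k.+1] ->
             exists2 c, c \in Mbox_c k.+1 true & f c = R.
  move=> R HR; have [c Hc Hf] := surj true R; exists c => //.
  by rewrite Mc Hc eqxx andbT Mbox_water //; rewrite /f in Hf; rewrite Hf.
split => //; try by split.
have im0 : f @: Mbox_c k.+1 false = Nurik k.+1.
  apply/eqP; rewrite eqEsubset; apply/andP; split; apply/subsetP => R.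
    by case/imsetP => c Hc ->; apply: P1.
  by move=> HR; have [c Hc <-] := P3 R HR; apply: imset_f.
have im1 : f @: Mbox_c k.+1 true = Nurik_i k.+1 1 :|: Nurik_i k.+1 2 :|: [set R_land k.+1].
  apply/eqP; rewrite eqEsubset; apply/andP; split; apply/subsetP => R.
    by case/imsetP => c Hc ->; apply: P4.
  by move=> HR; have [c Hc <-] := P6 R HR; apply: imset_f.
have c0 := card_in_imset (inj false); rewrite im0 in c0.
have c1 := card_in_imset (inj true); rewrite im1 in c1.
have split_card : #|Mbox (2 * k.+1).+1| = #|Mbox_c k.+1 true| + #|Mbox_c k.+1 false|.
  have E1 : Mbox_c k.+1 true = Mbox (2 * k.+1).+1 :&: [set c : {ffun 'I_(2 * k.+1).+1 -> bool} | c (ctr k)].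
    by apply/setP => c; rewrite !inE eqb_id.
  have E2 : Mbox_c k.+1 false = Mbox (2 * k.+1).+1 :\: [set c : {ffun 'I_(2 * k.+1).+1 -> bool} | c (ctr k)].
    by apply/setP => c; rewrite !inE eqbF_neg andbC.
  by rewrite E1 E2 cardsID.
have d12 : Nurik_i k.+1 1 :&: Nurik_i k.+1 2 = set0.
  apply/setP => R; rewrite in_setI !Nurik_i_mem in_set0.
  by apply/negbTE/negP => /andP [/andP [_ /eqP ->] /andP [_]].
have d3 : (Nurik_i k.+1 1 :|: Nurik_i k.+1 2) :&: [set R_land k.+1] = set0.
  apply/setP => R; rewrite in_setI in_set1 in_set0.
  apply/negbTE/negP => /andP [H /eqP E]; move: H; rewrite E in_setU !Nurik_i_mem.
  by rewrite !ffunE /= andbF.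
rewrite split_card -c0 -c1 cardsU d3 cards0 subn0 cardsU d12 cards0 subn0 cards1.
by rewrite addnC !addnA. Qed.
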